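(* Let $n\ge 2$ be an integer and $A\subseteq L_n$. Then $(X_n,\tau(A))$ is perfect (respectively Lindelöf, respectively $\sigma$-compact) if and only if the subspace $(L_n,\tau(A)|_{L_n})$ is perfect (respectively Lindelöf, respectively $\sigma$-compact).
   Context: For $\overline{x},\overline{a}\in\mathbb R^n$ let $|\overline{x}-\overline{a}|$ be the Euclidean distance and $B(\overline{a},\epsilon)=\{\overline{x}\in\mathbb R^n:|\overline{x}-\overline{a}|<\epsilon\}$. Let $P_n=\{\overline{x}\in\mathbb R^n: x_n>0\}$, $L_n=\{\overline{x}\in\mathbb R^n: x_n=0\}$, $X_n=P_n\cup L_n$. For $\overline{a}\in L_n$ and $\epsilon>0$ put $\overline{a(\epsilon)}=(a_1,\dots,a_{n-1},\epsilon)$ and $\tilde B(\overline{a},\epsilon)=\{\overline{a}\}\cup B(\overline{a(\epsilon)},\epsilon)$. For $A\subseteq L_n$, the topology $\tau(A)$ on $X_n$ is generated by the local bases: at $\overline{a}\in P_n$, the sets $B(\overline{a},\epsilon)$ with $0<\epsilon<a_n$; at $\overline{a}\in A$, the sets $B(\overline{a},\epsilon)\cap X_n$ with $\epsilon>0$; at $\overline{a}\in L_n\setminus A$, the sets $\tilde B(\overline{a},\epsilon)$ with $\epsilon>0$. A space is perfect if every closed set is a $G_\delta$-set. *)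

(* Defs.v *)
From HB Require Import structures.
From mathcomp Require Import all_boot all_order all_algebra.
From mathcomp Require Import all_classical.
From mathcomp Require Import Rstruct.

Set Implicit Arguments.
Unset Strict Implicit.
Unset Printing Implicit Defensive.
Import Order.TTheory GRing.Theory Num.Theory.
Local Open Scope ring_scope.
Local Open Scope classical_set_scope.

Definition Real : Type := Rdefinitions.R.

(* Points of R^{k.+1}; the last coordinate x_n is x 0 ord_max. *)
Definition pt (k : nat) := 'rV[Real]_k.+1.

Definition lastc {k : nat} (x : pt k) : Real := x 0 ord_max.

Definition edist {k : nat} (x a : pt k) : Real :=
  Num.sqrt (\sum_(i < k.+1) (x 0 i - a 0 i) ^+ 2).

Definition ball_e {k : nat} (a : pt k) (e : Real) : set (pt k) :=
  [set x | edist x a < e].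

Definition Pn {k : nat} : set (pt k) := [set x | 0 < lastc x].
Definition Ln {k : nat} : set (pt k) := [set x | lastc x = 0].
Definition Xn {k : nat} : set (pt k) := Pn `|` Ln.

Definition a_eps {k : nat} (a : pt k) (e : Real) : pt k :=
  \row_(i < k.+1) (if i == ord_max then e else a 0 i).

Definition tball {k : nat} (a : pt k) (e : Real) : set (pt k) :=
  [set a] `|` ball_e (a_eps a e) e.

Definition tau_open {k : nat} (A : set (pt k)) (U : set (pt k)) : Prop :=
  U `<=` Xn /\
  forall a, U a ->
    (Pn a -> exists e : Real, 0 < e /\ e < lastc a /\ ball_e a e `<=` U) /\
    (Ln a -> A a -> exists e : Real, 0 < e /\ ball_e a e `&` Xn `<=` U) /\
    (Ln a -> ~ A a -> exists e : Real, 0 < e /\ tball a e `<=` U).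

Definition subspace_open {T : Type} (S' : set T) (op : set T -> Prop)
  (V : set T) : Prop := exists U, op U /\ V = U `&` S'.

(* General topological notions for a space given by its carrier S
   and its family of open sets op (all subsets of S). *)
Definition perfect_sp {T : Type} (S : set T) (op : set T -> Prop) : Prop :=
  forall F : set T, F `<=` S -> op (S `\` F) ->
    exists G : nat -> set T, (forall j, op (G j)) /\ F = \bigcap_j G j.

Definition lindelof_sp {T : Type} (S : set T) (op : set T -> Prop) : Prop :=
  forall C : set (set T), (forall U, C U -> op U) ->
    S `<=` \bigcup_(U in C) U ->
    exists D : set (set T), [/\ D `<=` C, countable D & S `<=` \bigcup_(U in D) U].

Definition compact_sp {T : Type} (op : set T -> Prop) (K : set T) : Prop :=
  forall C : set (set T), (forall U, C U -> op U) ->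
    K `<=` \bigcup_(U in C) U ->
    exists D : set (set T), [/\ D `<=` C, finite_set D & K `<=` \bigcup_(U in D) U].

Definition sigma_compact_sp {T : Type} (S : set T) (op : set T -> Prop) : Prop :=
  exists K : nat -> set T,
    (forall j, K j `<=` S /\ compact_sp op (K j)) /\ S = \bigcup_j K j.

(* Main.v *)
Require Import Defs.
From HB Require Import structures.
From mathcomp Require Import all_boot all_order all_algebra.
From mathcomp Require Import all_classical all_reals all_analysis.
From mathcomp Require Import Rstruct Rstruct_topology.
From mathcomp Require Import finmap ring lra.
Import Order.TTheory GRing.Theory Num.Theory.
Import numFieldTopology.Exports.
Local Open Scope classical_set_scope.
Local Open Scope ring_scope.

Set Implicit Arguments.
Unset Strict Implicit.
Unset Printing Implicit Defensive.

Local Notation RR := Rdefinitions.R.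

Definition co {k} (x : pt k) (i : 'I_k.+1) : RR := (x : 'rV[RR]_k.+1) 0 i.

Lemma coord_le k (x a : pt k) i : `|co x i - co a i| <= Defs.edist x a.
Proof.
rewrite /Defs.edist -sqrtr_sqr ler_sqrt; last by apply: sumr_ge0 => j _; exact: sqr_ge0.
rewrite (bigD1 i) //= lerDl; apply: sumr_ge0 => j _; exact: sqr_ge0.
Qed.

Lemma aux_sq (R : realFieldType) (r : R) n : r ^+ 2 *+ n.+1 <= (n.+1%:R * r) ^+ 2.
Proof.
rewrite exprMn -mulr_natr mulrC; apply: ler_wpM2r; first exact: sqr_ge0.
by rewrite expr2 -natrM ler_nat leq_pmulr.
Qed.

Lemma edist_le k (x a : pt k) (r : RR) :
  (forall i, `|co x i - co a i| <= r) -> Defs.edist x a <= k.+1%:R * r.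
Proof.
move=> H; have r0 : 0 <= r by apply: le_trans (H ord0).
rewrite /Defs.edist -(ger0_norm (mulr_ge0 (ler0n _ k.+1) r0)) -sqrtr_sqr ler_sqrt; last exact: sqr_ge0.
apply: (@le_trans _ _ (\sum_(i < k.+1) r ^+ 2)).
  apply: ler_sum => i _; rewrite -[X in X <= _](real_normK (num_real _)); apply: lerXn2r; rewrite ?nnegrE //.
  exact: H.
by rewrite sumr_const card_ord; apply: aux_sq.
Qed.

Lemma lastc_co k (x : pt k) : lastc x = co x ord_max. Proof. by []. Qed.

Lemma co_aeps k (a : pt k) e i : co (a_eps a e) i = if i == ord_max then e else co a i.
Proof. by rewrite /co /a_eps mxE. Qed.

Lemma lastc_aeps k (a : pt k) e : lastc (a_eps a e) = e.
Proof. by rewrite lastc_co co_aeps eqxx. Qed.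

Lemma lastc_dist k (x a : pt k) : `|lastc x - lastc a| <= Defs.edist x a.
Proof. exact: coord_le. Qed.

Lemma ball_Pn k (x : pt k) e : e <= lastc x -> ball_e x e `<=` Pn.
Proof.
move=> he y; rewrite /ball_e /Pn /= => hy.
have := lastc_dist y x; rewrite ler_norml => /andP[h1 h2]; lra.
Qed.

Lemma Xn_Pn k (x : pt k) : Pn x -> Xn x. Proof. by left. Qed.

Lemma Pn_Ln k (x : pt k) : Pn x -> Ln x -> False.
Proof. rewrite /Pn /Ln /= => h1 h2; by rewrite h2 ltxx in h1. Qed.

Lemma Pn_open k (A : set (pt k)) : tau_open A Pn.
Proof.
split; first by move=> x; exact: Xn_Pn.
move=> a Pa; split; last by split=> /(Pn_Ln Pa).
exists (lastc a / 2); have h : 0 < lastc a by [].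
split; first lra. split; first lra.
apply: ball_Pn; lra.
Qed.

Lemma open_U k (A U V : set (pt k)) : tau_open A U -> tau_open A V -> tau_open A (U `|` V).
Proof.
move=> [UX HU] [VX HV]; split; first by move=> x [/UX|/VX].
move=> a [/HU|/HV] [h1 [h2 h3]].
- split; first by move=> /h1 [e [? [? s]]]; exists e; split=> //; split=> // y /s; left.
  split; first by move=> La Aa; have [e [? s]] := h2 La Aa; exists e; split=> // y /s; left.
  by move=> La Aa; have [e [? s]] := h3 La Aa; exists e; split=> // y /s; left.
- split; first by move=> /h1 [e [? [? s]]]; exists e; split=> //; split=> // y /s; right.
  split; first by move=> La Aa; have [e [? s]] := h2 La Aa; exists e; split=> // y /s; right.
  by move=> La Aa; have [e [? s]] := h3 La Aa; exists e; split=> // y /s; right.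
Qed.

Lemma tball_Pn k (a : pt k) e : 0 < e -> ball_e (a_eps a e) e `<=` Pn.
Proof. by move=> e0; apply: ball_Pn; rewrite lastc_aeps. Qed.

Lemma Xn_open k (A : set (pt k)) : tau_open A Xn.
Proof.
split => // a Xa; split.
  move=> Pa; have [_ /(_ a Pa) [h _]] := Pn_open A; have [e [? [? s]]] := h Pa; exists e; split => //; split => // y /s; exact: Xn_Pn.
split; first by move=> _ _; exists 1; split => //; by move=> y [].
move=> _ _; exists 1; split => // y [->//|/tball_Pn]; by move=> /(_ ltr01) /Xn_Pn.
Qed.
Definition Idx k := ('rV[int]_k.+1 * nat)%type.
Definition cen k (t : Idx k) (i : 'I_k.+1) : RR := ((t.1 : 'rV[int]_k.+1) 0 i)%:~R / t.2.+1%:R.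
Definition rad k (t : Idx k) : RR := t.2.+1%:R^-1.
Definition gbox k (t : Idx k) : set (pt k) :=
  [set v | forall i, `[cen t i - rad t, cen t i + rad t]%classic (co v i)].

Lemma rad_gt0 k (t : Idx k) : 0 < rad t.
Proof. by rewrite /rad invr_gt0 ltr0n. Qed.

Lemma gboxE k (t : Idx k) v : gbox t v <-> forall i, `|co v i - cen t i| <= rad t.
Proof.
split => h i.
  have := h i; rewrite /= in_itv /= => /andP[h1 h2]; rewrite ler_norml; apply/andP; split; lra.
have := h i; rewrite ler_norml => /andP[h1 h2]; rewrite /= in_itv /=; apply/andP; split; lra.
Qed.

Lemma floor_near (R : realType) (x M : R) : 0 < M -> `|x - (Num.floor (x*M))%:~R / M| <= M^-1.
Proof.
move=> M0; have /andP[h1 h2] := floor_itv (x * M).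
rewrite rmorphD /= in h2.
set z := (Num.floor (x*M))%:~R in h1 h2 *.
have hi : 0 < M^-1 by rewrite invr_gt0.
have w1 : z / M <= x by rewrite ler_pdivrMr.
have w2 : x < (z + 1) / M by rewrite ltr_pdivlMr.
rewrite mulrDl mul1r in w2.
rewrite ler_norml; apply/andP; split; lra.
Qed.

Lemma abs_tri (R : realDomainType) (y x c r : R) :
  `|y - c| <= r -> `|x - c| <= r -> `|y - x| <= 2 * r.
Proof. rewrite !ler_norml => /andP[? ?] /andP[? ?]; apply/andP; split; lra. Qed.

Lemma grid k (x : pt k) e : 0 < e -> exists t : Idx k, gbox t x /\ gbox t `<=` ball_e x e.
Proof.
move=> e0; set N := Num.truncn (k.+1%:R * 2 / e); set M : RR := N.+1%:R.
have M0 : 0 < M by rewrite ltr0n.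
have hN : k.+1%:R * 2 / e < M := truncnS_gt _.
pose t : Idx k := (\row_i Num.floor (co x i * M), N).
have hx i : `|co x i - cen t i| <= rad t.
  by rewrite /cen /rad /= mxE; apply: floor_near.
exists t; split; first by apply/gboxE.
move=> y /gboxE hy; rewrite /ball_e /=.
apply: le_lt_trans (edist_le (r := 2 * rad t) _) _.
  by move=> i; apply: abs_tri (hy i) (hx i).
rewrite mulrA /rad /= -/M ltr_pdivrMr //.
rewrite ltr_pdivrMr // in hN; by rewrite [e * M]mulrC.
Qed.

Lemma gbox_lastc k (t : Idx k) y : gbox t y -> cen t ord_max - rad t <= lastc y.
Proof. by move=> /gboxE /(_ ord_max); rewrite ler_norml lastc_co => /andP[h1 h2]; lra. Qed.

Lemma gbox_c_pos k (t : Idx k) : gbox t `<=` Pn -> 0 < cen t ord_max - rad t.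
Proof.
move=> sP; pose p := a_eps (\row_i cen t i : pt k) (cen t ord_max - rad t).
have : Pn p.
  apply: sP; apply/gboxE => i; rewrite co_aeps; case: eqP => [->|_].
    by rewrite addrAC subrr add0r normrN ger0_norm // ltW // rad_gt0.
  by rewrite /co mxE subrr normr0 ltW // rad_gt0.
by rewrite /Pn /= lastc_aeps.
Qed.

Lemma abs_tri2 (R : realDomainType) (y a c : R) : `|a - c| <= `|y - c| + `|y - a|.
Proof.
rewrite -[a - c](_ : (a - y) + (y - c) = a - c); last by rewrite addrA subrK.
apply: le_trans (ler_normD _ _) _; by rewrite addrC (distrC a y).
Qed.

Lemma gbox_closed k (A : set (pt k)) (t : Idx k) :
  gbox t `<=` Pn -> tau_open A (Xn `\` gbox t).
Proof.
move=> sP; have c0 := gbox_c_pos sP; set c := cen t ord_max - rad t in c0.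
split; first by move=> x [].
move=> a [Xa nBa]; split; [|split].
- move=> Pa; have : exists i, rad t < `|co a i - cen t i|.
    apply: contra_notP nBa => h; apply/gboxE => i; rewrite leNgt; apply/negP => hi.
    by apply: h; exists i.
  case=> i hi; set d := `|co a i - cen t i| - rad t.
  have Pa' : 0 < lastc a := Pa.
  have d0 : 0 < d by rewrite subr_gt0.
  set m := Num.min d (lastc a).
  have m0 : 0 < m by rewrite lt_min d0 Pa'.
  have m1 : m <= d by rewrite ge_min lexx.
  have m2 : m <= lastc a by rewrite ge_min lexx orbT.
  exists (m / 2); split; first lra. split; first lra.
  move=> y hy; rewrite /ball_e /= in hy; split.
    by apply: Xn_Pn; apply: (@ball_Pn _ a (m / 2)) => //; lra.
  move=> /gboxE /(_ i) hyi.
  have := coord_le y a i; have := abs_tri2 (co y i) (co a i) (cen t i).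
  rewrite -/d in hi *; move=> h1 h2.
  have : `|co a i - cen t i| = d + rad t by rewrite /d subrK.
  lra.
- move=> La Aa; exists c; split => // y [hy Xy]; split => // By.
  have := gbox_lastc By; have := lastc_dist y a; rewrite /Ln /= in La.
  rewrite La subr0 ler_norml -/c => /andP[h1 h2] h3; rewrite /ball_e /= in hy; lra.
- move=> La nAa; exists (c / 2); split; first lra.
  move=> y [-> | hy]; first by split.
  rewrite /ball_e /= in hy.
  have := lastc_dist y (a_eps a (c / 2)); rewrite lastc_aeps ler_norml => /andP[h1 h2].
  split; first by apply: Xn_Pn; rewrite /Pn /=; lra.
  by move=> /gbox_lastc; rewrite -/c; lra.
Qed.

Lemma aux_r (R : realFieldType) (e : R) n :
  0 < e -> 0 < e / (2 * n.+1%:R) /\ n.+1%:R * (e / (2 * n.+1%:R)) < e.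
Proof.
move=> e0; have n0 : 0 < n.+1%:R :> R by rewrite ltr0n.
split; first by rewrite divr_gt0 // mulr_gt0.
have -> : n.+1%:R * (e / (2 * n.+1%:R)) = e / 2.
  by field; rewrite ?gt_eqF //; apply/andP; split; rewrite gt_eqF.
lra.
Qed.

Lemma ball_mx k (y z : pt k) r : ball y r z -> forall i, `|co y i - co z i| < r.
Proof. by case=> _ H i; have := H 0 i. Qed.

Lemma nbhs_of_ball k (y : pt k) e U : 0 < e -> ball_e y e `<=` U -> nbhs y U.
Proof.
move=> e0 sU; have [r0 hr] := aux_r k e0.
apply/nbhs_ballP; exists (e / (2 * k.+1%:R)) => // z /ball_mx hz.
apply: sU; rewrite /ball_e /=.
apply: le_lt_trans (edist_le (r := e / (2 * k.+1%:R)) _) hr.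
by move=> i; rewrite distrC ltW.
Qed.

Lemma gbox_mx_compact k (t : Idx k) : compact (gbox t).
Proof.
exact: (@rV_compact _ k.+1 (fun i => `[cen t i - rad t, cen t i + rad t]%classic)
  (fun i => @segment_compact _ _ _)).
Qed.

Lemma gbox_compact k (A : set (pt k)) (t : Idx k) :
  gbox t `<=` Pn -> compact_sp (tau_open A) (gbox t).
Proof.
move=> sP C HC cov.
have := @gbox_mx_compact k t; rewrite compact_cover => cpt.
have hcov : gbox t `<=` cover C interior.
  move=> y By; have [U CU Uy] := cov y By; exists U => //.
  have [_ /(_ y Uy) [h _]] := HC U CU.
  have [e [e0 [_ s]]] := h (sP y By).
  exact: nbhs_of_ball e0 s.
have [D' sD' cD'] := cpt (set (pt k)) C interior (fun U _ => @open_interior _ U) hcov.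
exists [set` D']; split.
- by move=> U /= hU; have := sD' U hU; rewrite in_setE.
- exact: finite_fset.
- move=> y /cD' [U hU iU]; exists U => //; exact: nbhs_singleton.
Qed.

Definition bsel k (O : set (pt k)) (j : nat) : set (pt k) :=
  match (choice.unpickle j : option (Idx k)) with
  | Some t => if `[< gbox t `<=` O >] then gbox t else set0
  | None => set0 end.

Lemma bsel_cases k (O : set (pt k)) j :
  bsel O j = set0 \/ exists t, bsel O j = gbox t /\ gbox t `<=` O.
Proof.
rewrite /bsel; case: (choice.unpickle j) => [t|]; last by left.
by case: asboolP => h; [right; exists t | left].
Qed.

Lemma bsel_sub k (O : set (pt k)) j : bsel O j `<=` O.
Proof. by have [e|[t [e h]]] := bsel_cases O j; rewrite e. Qed.

Lemma bsel_pickle k (O : set (pt k)) (t : Idx k) : gbox t `<=` O -> bsel O (choice.pickle t) = gbox t.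
Proof. by move=> h; rewrite /bsel choice.pickleK; case: asboolP. Qed.

Lemma bsel_cover k (O : set (pt k)) :
  (forall x, O x -> exists e, 0 < e /\ ball_e x e `<=` O) -> O = \bigcup_j bsel O j.
Proof.
move=> HO; apply/seteqP; split; last by move=> x [j _ /bsel_sub].
move=> x Ox; have [e [e0 s]] := HO x Ox.
have [t [tx ts]] := grid x e0.
by exists (choice.pickle t) => //; rewrite bsel_pickle // => y /ts /s.
Qed.

Lemma Pn_ball k (x : pt k) : Pn x -> exists e, 0 < e /\ ball_e x e `<=` Pn.
Proof. by move=> Px; exists (lastc x); split => //; apply: ball_Pn. Qed.

Lemma compact_set0 k (op : set (pt k) -> Prop) : compact_sp op set0.
Proof. by move=> C _ _; exists set0; split => //; exact: finite_set0. Qed.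

Lemma Pn_sigma k (A : set (pt k)) : exists K : nat -> set (pt k),
  (forall j, K j `<=` Xn /\ compact_sp (tau_open A) (K j)) /\ Pn = \bigcup_j K j.
Proof.
exists (bsel Pn); split; last exact: bsel_cover (@Pn_ball k).
move=> j; split; first by move=> x /bsel_sub /Xn_Pn.
have [e|[t [e h]]] := bsel_cases (@Pn k) j; rewrite e; first exact: compact_set0.
exact: gbox_compact.
Qed.

Lemma Pn_Fsig k (A O : set (pt k)) :
  (forall x, O x -> exists e, 0 < e /\ ball_e x e `<=` O) -> O `<=` Pn ->
  (forall j, tau_open A (Xn `\` bsel O j)) /\ O = \bigcup_j bsel O j.
Proof.
move=> oO sP; split; last exact: bsel_cover oO.
move=> j; have [e|[t [e h]]] := bsel_cases O j; rewrite e; first by rewrite setD0; exact: Xn_open.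
by apply: gbox_closed => y /h /sP.
Qed.

Lemma Pn_lind k (A : set (pt k)) (C : set (set (pt k))) :
  (forall U, C U -> tau_open A U) -> Xn `<=` \bigcup_(U in C) U ->
  exists D, [/\ D `<=` C, countable D & Pn `<=` \bigcup_(U in D) U].
Proof.
move=> HC cov.
have : forall j, exists U, (exists U', C U' /\ bsel Pn j `<=` U') -> C U /\ bsel Pn j `<=` U.
  move=> j; case: (pselect (exists U', C U' /\ bsel Pn j `<=` U')) => [[U' h]|h].
    by exists U'.
  by exists set0 => /h.
case/choice => f hf.
exists [set U | exists j, (exists U', C U' /\ bsel Pn j `<=` U') /\ U = f j]; split.
- by move=> U [j [h ->]]; have [] := hf j h.
- apply: (@sub_countable _ _ _ (f @` setT)); last first.
    by apply: sub_countable (card_image_le f setT) _; exact: countableP.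
  by apply: subset_card_le => U [j [_ ->]]; exists j.
- move=> x Px; have [U CU Ux] := cov x (Xn_Pn Px).
  have [_ /(_ x Ux) [/(_ Px) [e [e0 [elt s]]] _]] := HC U CU.
  have [t [tx ts]] := grid x e0.
  have tP : gbox t `<=` Pn by move=> y /ts; apply: ball_Pn; exact: ltW.
  have h : exists U', C U' /\ bsel Pn (choice.pickle t) `<=` U'.
    by exists U; split => //; rewrite bsel_pickle // => y /ts /s.
  exists (f (choice.pickle t)); first by exists (choice.pickle t).
  by have [_ ] := hf _ h; rewrite bsel_pickle //; apply.
Qed.

Lemma countableU T (A B : set T) : countable A -> countable B -> countable (A `|` B).
Proof.
move=> cA cB; rewrite -bigcup2E; apply: bigcup_countable => // i _.
by rewrite /bigcup2; case: i => [|[|i]].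
Qed.

Lemma Ln_sub k : (@Ln k) `<=` Xn.
Proof. by move=> x Lx; right. Qed.

Section Main.
Variables (k : nat) (A : set (pt k)).
Local Notation LO := (subspace_open Ln (tau_open A)).

Lemma perf_to : perfect_sp Xn (tau_open A) -> perfect_sp Ln LO.
Proof.
move=> HP F FL [U [oU e]].
have oV : tau_open A (Xn `\` F).
  have -> : Xn `\` F = U `|` Pn.
    apply/seteqP; split.
    - move=> x [[Px|Lx] nF]; first by right.
      have : (Ln `\` F) x by [].
      by rewrite e => -[Ux _]; left.
    - move=> x [Ux|Px].
        split; first exact: oU.1.
        move=> Fx; have : (U `&` Ln) x by split => //; exact: FL.
        by rewrite -e => -[].
      by split; [exact: Xn_Pn | move=> /FL; exact: Pn_Ln].
  exact: open_U oU (Pn_open A).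
have [G [oG eG]] := HP F (fun x Fx => Ln_sub (FL x Fx)) oV.
exists (fun j => G j `&` Ln); split.
  by move=> j; exists (G j).
apply/seteqP; split.
  by move=> x Fx j _; split; [rewrite eG in Fx; exact: Fx j I | exact: FL].
by move=> x H; rewrite eG => j _; have [] := H j I.
Qed.

Lemma perf_from : perfect_sp Ln LO -> perfect_sp Xn (tau_open A).
Proof.
move=> HP F FX oC.
have hL : LO (Ln `\` (F `&` Ln)).
  exists (Xn `\` F); split => //; apply/seteqP; split => x.
    by move=> [Lx nF]; split => //; split; [right | move=> Fx; apply: nF].
  by move=> [[Xx nF] Lx]; split => // -[].
have [G [oG eG]] := HP (F `&` Ln) (@subIsetr _ _ _) hL.
have [U hU] := choice oG.
set O := Pn `\` F.
have hO : forall x, O x -> exists e, 0 < e /\ ball_e x e `<=` O.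
  move=> x [Px nF]; have [_ /(_ x (conj (Xn_Pn Px) nF)) [/(_ Px) [e [e0 [elt s]]] _]] := oC.
  exists e; split => // y hy; split; first by apply: (ball_Pn (ltW elt)).
  by have [] := s y hy.
have [oB eB] := Pn_Fsig A hO (@subDsetl _ _ _).
exists (fun i => if odd i then Xn `\` bsel O i./2 else U i./2 `|` Pn); split.
  by move=> i; case: odd; [exact: oB | exact: open_U (hU _).1 (Pn_open A)].
apply/seteqP; split.
- move=> x Fx i _; case: odd.
    by split; [exact: FX | move=> /bsel_sub [_ nF]; exact: nF Fx].
  case: (FX x Fx) => [Px|Lx]; first by right.
  left; have : (F `&` Ln) x by [].
  rewrite eG => /(_ i./2 I); rewrite (hU _).2; by case.
- move=> x Hx; have [Xx _] := Hx 1%N I; case: Xx => [Px|Lx].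
    apply: contrapT => nF; have : O x by [].
    rewrite eB => -[j _ bj].
    have := Hx j.*2.+1 I; rewrite /= odd_double /= uphalf_double.
    by move=> [_]; apply.
  have : (F `&` Ln) x; last by case.
  rewrite eG => j _; have := Hx j.*2 I; rewrite odd_double doubleK (hU j).2.
  by case=> // /Pn_Ln /(_ Lx).
Qed.

Lemma lind_to : lindelof_sp Xn (tau_open A) -> lindelof_sp Ln LO.
Proof.
move=> HL C HC cov.
set C' := [set U | tau_open A U /\ C (U `&` Ln)] `|` [set Pn].
have h1 : forall U, C' U -> tau_open A U.
  by move=> U [[oU _]| ->]; [done | exact: Pn_open].
have h2 : Xn `<=` \bigcup_(U in C') U.
  move=> x [Px|Lx]; first by exists Pn => //; right.
  have [V CV Vx] := cov x Lx; have [U [oU eV]] := HC V CV.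
  exists U; first by left; split => //; rewrite -eV.
  by rewrite eV in Vx; case: Vx.
have [D [sD cD covD]] := HL C' h1 h2.
exists [set V | C V /\ exists U, D U /\ V = U `&` Ln]; split.
- by move=> V [].
- apply: (@sub_countable _ _ _ ((fun U => U `&` Ln) @` D)).
    by apply: subset_card_le => V [_ [U [DU ->]]]; exists U.
  exact: sub_countable (card_image_le _ D) cD.
- move=> x Lx; have [U DU Ux] := covD x (Ln_sub Lx).
  case: (sD U DU) => [[oU CUL]|eU]; last by rewrite eU in Ux; case: (Pn_Ln Ux Lx).
  by exists (U `&` Ln) => //; split => //; exists U.
Qed.

Lemma lind_from : lindelof_sp Ln LO -> lindelof_sp Xn (tau_open A).
Proof.
move=> HL C HC cov.
have h1 : forall V, [set V | exists U, C U /\ V = U `&` Ln] V -> LO V.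
  by move=> V [U [CU ->]]; exists U; split => //; exact: HC.
have h2 : Ln `<=` \bigcup_(V in [set V | exists U, C U /\ V = U `&` Ln]) V.
  move=> x Lx; have [U CU Ux] := cov x (Ln_sub Lx).
  by exists (U `&` Ln); [exists U | split].
have [D1 [sD1 cD1 covD1]] := HL _ h1 h2.
have : forall V, exists U, D1 V -> C U /\ V = U `&` Ln.
  move=> V; case: (pselect (D1 V)) => h; last by exists set0.
  by have [U [CU e]] := sD1 V h; exists U.
case/choice => g hg.
have [D2 [sD2 cD2 covD2]] := Pn_lind HC cov.
exists (g @` D1 `|` D2); split.
- by move=> U [[V DV <-] | /sD2 //]; exact: (hg V DV).1.
- apply: countableU => //; exact: sub_countable (card_image_le _ D1) cD1.
- move=> x [Px|Lx].
    by have [U DU Ux] := covD2 x Px; exists U => //; right.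
  have [V DV Vx] := covD1 x Lx; exists (g V); first by left; exists V.
  by rewrite (hg V DV).2 in Vx; case: Vx.
Qed.

Lemma sig_to : sigma_compact_sp Xn (tau_open A) -> sigma_compact_sp Ln LO.
Proof.
move=> [K [hK eK]]; exists (fun j => K j `&` Ln); split.
  move=> j; split; first exact: subIsetr.
  move=> C HC cov.
  set C' := [set U | tau_open A U /\ C (U `&` Ln)] `|` [set Pn].
  have h1 : forall U, C' U -> tau_open A U.
    by move=> U [[oU _]| ->]; [done | exact: Pn_open].
  have h2 : K j `<=` \bigcup_(U in C') U.
    move=> x Kx; case: ((hK j).1 x Kx) => [Px|Lx]; first by exists Pn => //; right.
    have [V CV Vx] := cov x (conj Kx Lx); have [U [oU eV]] := HC V CV.
    exists U; first by left; split => //; rewrite -eV.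
    by rewrite eV in Vx; case: Vx.
  have [D [sD fD covD]] := (hK j).2 C' h1 h2.
  exists [set V | C V /\ exists U, D U /\ V = U `&` Ln]; split.
  - by move=> V [].
  - apply: (@sub_finite_set _ _ ((fun U => U `&` Ln) @` D)); last exact: finite_image.
    by move=> V [_ [U [DU ->]]]; exists U.
  - move=> x [Kx Lx]; have [U DU Ux] := covD x Kx.
    case: (sD U DU) => [[oU CUL]|eU]; last by rewrite eU in Ux; case: (Pn_Ln Ux Lx).
    by exists (U `&` Ln) => //; split => //; exists U.
apply/seteqP; split; last by move=> x [j _ [_ Lx]].
move=> x Lx; have := Ln_sub Lx; rewrite eK => -[j _ Kx]; by exists j.
Qed.

Lemma compact_lift K : K `<=` Ln -> compact_sp LO K -> compact_sp (tau_open A) K.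
Proof.
move=> KL cK C HC cov.
have h1 : forall V, [set V | exists U, C U /\ V = U `&` Ln] V -> LO V.
  by move=> V [U [CU ->]]; exists U; split => //; exact: HC.
have h2 : K `<=` \bigcup_(V in [set V | exists U, C U /\ V = U `&` Ln]) V.
  move=> x Kx; have [U CU Ux] := cov x Kx.
  by exists (U `&` Ln); [exists U | split => //; exact: KL].
have [D1 [sD1 fD1 covD1]] := cK _ h1 h2.
have : forall V, exists U, D1 V -> C U /\ V = U `&` Ln.
  move=> V; case: (pselect (D1 V)) => h; last by exists set0.
  by have [U [CU e]] := sD1 V h; exists U.
case/choice => g hg.
exists (g @` D1); split.
- by move=> U [V DV <-]; exact: (hg V DV).1.
- exact: finite_image.
- move=> x Kx; have [V DV Vx] := covD1 x Kx; exists (g V); first by exists V.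
  by rewrite (hg V DV).2 in Vx; case: Vx.
Qed.

Lemma sig_from : sigma_compact_sp Ln LO -> sigma_compact_sp Xn (tau_open A).
Proof.
move=> [K [hK eK]]; have [K2 [hK2 eK2]] := Pn_sigma A.
exists (fun i => if odd i then K2 i./2 else K i./2); split.
  move=> i; case: odd; first exact: hK2.
  split; first by move=> x /(hK _).1 /Ln_sub.
  exact: compact_lift (hK _).1 (hK _).2.
apply/seteqP; split.
- move=> x [Px|Lx].
    rewrite eK2 in Px; case: Px => j _ Kx; exists j.*2.+1 => //.
    by rewrite /= odd_double /= uphalf_double.
  rewrite eK in Lx; case: Lx => j _ Kx; exists j.*2 => //.
  by rewrite odd_double doubleK.
- move=> x [i _]; case: odd => h; first exact: (hK2 _).1 _ h.
  exact: Ln_sub ((hK _).1 _ h).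
Qed.

End Main.

Theorem mainTheorem4 (m : nat) (A : set (pt m.+1)) :
  A `<=` Ln ->
  [/\ perfect_sp Xn (tau_open A) <->
        perfect_sp Ln (subspace_open Ln (tau_open A)),
      lindelof_sp Xn (tau_open A) <->
        lindelof_sp Ln (subspace_open Ln (tau_open A))
    & sigma_compact_sp Xn (tau_open A) <->
        sigma_compact_sp Ln (subspace_open Ln (tau_open A))].
Proof.
move=> _; split; split.
- exact: perf_to.
- exact: perf_from.
- exact: lind_to.
- exact: lind_from.
- exact: sig_to.
- exact: sig_from.
Qed.
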